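(* Let $p$ be a positive integer and let $Y$ be a lens space with $|H_1(Y)|=p$. Suppose that \[ \lambda(Y) - \lambda(L(p,1)) \leq \frac14\Big(\frac{p}{4}-1\Big). \] Then $Y$ is (orientation-preservingly) homeomorphic to one of $L(p,1)$, $L(p,2)$, or $L(p,3)$.
   Context: Orientation convention: $L(p,q)$ is $-p/q$ surgery on the unknot; in particular $L(p,1)$ is $-p$ surgery on the unknot, and $L(p,-q)$ is $L(p,q)$ with reversed orientation. $\lambda$ denotes the Casson–Walker invariant, normalized so that $\lambda(S^3)=0$, $\lambda(L(p,-q))=-\lambda(L(p,q))$, and for relatively prime $p>q>0$, $\lambda(L(p,q)) = \tfrac14 - \tfrac{p^2+q^2+1}{12pq} - \lambda(L(q,p))$. All homeomorphisms are orientation preserving. *)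

(* Defs.v *)
From mathcomp Require Import all_boot all_order all_algebra.
Set Implicit Arguments. Unset Strict Implicit. Unset Printing Implicit Defensive.
Import Order.TTheory GRing.Theory Num.Theory.
Local Open Scope ring_scope.

(* A lens space L(p,q): p a positive integer, q an integer coprime to p.
   (L(p,q) = -p/q surgery on the unknot; |H_1(L(p,q))| = p.) *)
Record lens := Lens { lens_p : nat; lens_q : int }.

Definition is_lens (Y : lens) : Prop :=
  (0 < lens_p Y)%N /\ coprimez (lens_q Y) (Posz (lens_p Y)).

Definition H1_order (Y : lens) : nat := lens_p Y.

(* Orientation-preserving homeomorphism of lens spaces, via the
   Reidemeister classification: L(p,q) ~= L(p',q') (or.-pres.) iff
   p = p' and q' = q or q q' = 1 (mod p). *)
Definition lens_homeo (Y Z : lens) : Prop :=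
  lens_p Y = lens_p Z /\
  ((lens_q Z == lens_q Y %[mod Posz (lens_p Y)])%Z \/
   (lens_q Y * lens_q Z == 1 %[mod Posz (lens_p Y)])%Z).

(* Casson-Walker invariant of L(p,r), 0 <= r < p, gcd(p,r)=1, computed by the
   recursion of the context: lambda(S^3)=lambda(L(1,r))=0 and for p>r>0,
   lambda(L(p,r)) = 1/4 - (p^2+r^2+1)/(12pr) - lambda(L(r,p)),
   with L(r,p) = L(r, p mod r).  [fuel] bounds the recursion depth. *)
Fixpoint cw_aux (fuel p r : nat) : rat :=
  match fuel with
  | 0%N => 0
  | S f => if r == 0%N then 0
           else 1/4 - ((p ^ 2 + r ^ 2 + 1)%N%:R / (12 * p * r)%N%:R)
                - cw_aux f r (p %% r)
  end.

(* lambda(L(p,q)) for arbitrary integer q coprime to p: depends only on q mod p. *)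
Definition casson_walker (Y : lens) : rat :=
  let p := lens_p Y in
  cw_aux p p (absz (lens_q Y %% Posz p)%Z).

(* Main.v *)
Require Import Defs.
From mathcomp Require Import all_boot all_order all_algebra.
From mathcomp Require Import ring lra zify.
Import Order.TTheory GRing.Theory Num.Theory.
Local Open Scope ring_scope.


Definition cw (p r : nat) : rat := cw_aux r.+1 p r.

Lemma cw_aux_eq f g p r : (r < f)%N -> (r < g)%N -> cw_aux f p r = cw_aux g p r.
Proof.
elim: f g p r => [|f IH] [|g] p r //= hf hg.
case: eqP => // /eqP r0.
congr (_ - _); apply: IH; apply: leq_trans (ltn_pmod _ _) _; rewrite ?lt0n //.
Qed.

Lemma cw_auxS f p r : cw_aux f.+1 p r = if r == 0%N then 0 else
  1/4 - ((p ^ 2 + r ^ 2 + 1)%N%:R / (12 * p * r)%N%:R) - cw_aux f r (p %% r).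
Proof. by []. Qed.

Lemma cw0 p : cw p 0 = 0.
Proof. by []. Qed.

Lemma cwS p r : (0 < r)%N ->
  cw p r = 1/4 - (p ^ 2 + r ^ 2 + 1)%N%:R / (12 * p * r)%N%:R - cw r (p %% r).
Proof.
move=> r0; rewrite [LHS]/cw cw_auxS; have -> : (r == 0%N) = false by case: r r0.
congr (_ - _); rewrite /cw; apply: cw_aux_eq => //; exact: ltn_pmod.
Qed.

Lemma cwK p r : (0 < p)%N -> (0 < r)%N ->
  12 * p%:R * r%:R * (cw p r + cw r (p %% r)) = 3 * p%:R * r%:R - p%:R^+2 - r%:R^+2 - 1 :> rat.
Proof.
move=> p0 r0; rewrite (cwS p r r0); set c := cw r _.
have hp : p%:R != 0 :> rat by rewrite pnatr_eq0 -lt0n.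
have hr : r%:R != 0 :> rat by rewrite pnatr_eq0 -lt0n.
rewrite !natrD !natrM; field; by rewrite hp hr.
Qed.

Lemma cw1 p : (0 < p)%N -> 12 * p%:R * cw p 1 = 3 * p%:R - p%:R^+2 - 2 :> rat.
Proof.
move=> p0; have := @cwK p 1 p0 isT; rewrite modn1 cw0 addr0 mulr1 => ->.
rewrite expr1n; ring.
Qed.

Lemma cw21 : cw 2 1 = 0. Proof. by apply/eqP; vm_compute. Qed.
Lemma cw31 : cw 3 1 = -1/18. Proof. by apply/eqP; vm_compute. Qed.
Lemma cw32 : cw 3 2 = 1/18. Proof. by apply/eqP; vm_compute. Qed.

Lemma coprime_subl x r : (r <= x)%N -> coprime r x -> coprime (x - r) x.
Proof.
move=> rx; rewrite /coprime => /eqP h.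
have e : gcdn r x = gcdn r (x - r) by rewrite -{1}(subnK rx) gcdnDr.
by rewrite -{2}(subnK rx) gcdnDl gcdnC -e h.
Qed.

Lemma cw_anti_lt m x : (0 < x)%N -> (x.*2 < m)%N ->
  cw m (m - x) = - cw m x.
Proof.
move=> x0 hm.
have xm : (x < m - x)%N by lia.
have e1 : (m %% (m - x))%N = x.
  have {1}-> : (m = (m - x) + x)%N by lia.
  by rewrite modnDl modn_small.
have e2 : ((m - x) %% x = m %% x)%N.
  have {2}-> : (m = (m - x) + x)%N by lia.
  by rewrite modnDr.
have m0 : (0 < m - x)%N by lia.
apply/eqP; rewrite -subr_eq0 opprK.
rewrite (cwS m (m - x) m0) e1 (cwS (m - x) x x0) e2 (cwS m x x0).
have hp : m%:R != 0 :> rat by rewrite pnatr_eq0; lia.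
have hx : x%:R != 0 :> rat by rewrite pnatr_eq0; lia.
have hmx : m%:R - x%:R != 0 :> rat.
  by rewrite -natrB ?pnatr_eq0; lia.
rewrite !natrD !natrM !natrB; try lia.
apply/eqP; field.
by rewrite hp hx hmx.
Qed.

Lemma cw_anti m x : (0 < x)%N -> (x < m)%N -> coprime x m ->
  cw m (m - x) = - cw m x.
Proof.
move=> x0 xm cop.
case: (ltngtP x.*2 m) => h.
- exact: cw_anti_lt.
- have := @cw_anti_lt m (m - x); rewrite subKn ?(ltnW xm) // => ->; try lia.
  by rewrite opprK.
- have x1 : x = 1%N.
    move: cop; rewrite -h -addnn /coprime gcdnDl gcdnn; by move/eqP.
  subst x; move: h => <-; rewrite /= cw21; by rewrite oppr0.
Qed.

Lemma mono_ge0 (i j : nat) {a x : rat} : 0 <= a -> 0 <= x -> 0 <= a^+i * x^+j.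
Proof. by move=> ha hx; apply: mulr_ge0; apply: exprn_ge0. Qed.

Lemma fin_step (c Cm M : rat) : 0 < c -> 0 <= c * ((M - 4) + 48 * Cm) -> -48 * Cm <= M - 4.
Proof. move=> hc; rewrite (pmulr_rge0 _ hc) => h; lra. Qed.

Lemma pure_gen (x k M X Cm Cy : rat) : 0 <= x -> 0 <= k -> X = 4 + x -> M = X + 1 + k ->
  12*M*X*(Cm - Cy) = 3*M*X - M^+2 - X^+2 - 1 -> -48*Cy <= X - 4 -> -48*Cm <= M - 4.
Proof.
move=> hx hk hX hM hK hIH.
have hMX : 0 < M*X by rewrite hM hX; apply: mulr_gt0; lra.
have hIH' := ler_wpM2l (ltW hMX) hIH.
apply: (@fin_step (12*M*X)); first by rewrite -mulrA; apply: mulr_gt0 => //; lra.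
move: hIH' hK; subst M X => hIH' hK.
have ? := mono_ge0 2 0 hx hk. have ? := mono_ge0 2 1 hx hk. have ? := mono_ge0 1 0 hx hk. have ? := mono_ge0 1 1 hx hk. have ? := mono_ge0 0 1 hx hk. have ? := mono_ge0 1 2 hx hk.
lra.
Qed.

Lemma pure_y1 (a x M X Cm Cy : rat) : 0 <= a -> 0 <= x -> X = 4 + x -> M = (4 + a)*X - 1 ->
  12*M*X*(Cm - Cy) = 3*M*X - M^+2 - X^+2 - 1 -> 12*X*Cy = 3*X - X^+2 - 2 -> -48*Cm <= M - 4.
Proof.
move=> ha hx hX hM hK hC.
have hC' : M*(12*X*Cy) = M*(3*X - X^+2 - 2) by rewrite hC.
have hMX : 0 < M*X by rewrite hM hX; apply: mulr_gt0; nra.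
apply: (@fin_step (12*M*X)); first by rewrite -mulrA; apply: mulr_gt0 => //; lra.
move: hC' hK; subst M X => hC' hK.
have ? := mono_ge0 2 3 ha hx. have ? := mono_ge0 2 2 ha hx. have ? := mono_ge0 1 3 ha hx. have ? := mono_ge0 1 2 ha hx. have ? := mono_ge0 2 1 ha hx. have ? := mono_ge0 1 1 ha hx. have ? := mono_ge0 1 0 ha hx. have ? := mono_ge0 0 2 ha hx. have ? := mono_ge0 0 1 ha hx.
lra.
Qed.

Lemma pure_y2 (a x M X Cm Cy : rat) : 0 <= a -> 0 <= x -> X = 5 + x -> M = (2 + a)*X - 2 ->
  12*M*X*(Cm - Cy) = 3*M*X - M^+2 - X^+2 - 1 -> 24*X*Cy = 6*X - X^+2 - 5 -> -48*Cm <= M - 4.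
Proof.
move=> ha hx hX hM hK hC.
have hC' : M*(24*X*Cy) = M*(6*X - X^+2 - 5) by rewrite hC.
have hMX : 0 < M*X by rewrite hM hX; apply: mulr_gt0; nra.
apply: (@fin_step (12*M*X)); first by rewrite -mulrA; apply: mulr_gt0 => //; lra.
move: hC' hK; subst M X => hC' hK.
have ? := mono_ge0 2 3 ha hx. have ? := mono_ge0 2 2 ha hx. have ? := mono_ge0 1 3 ha hx. have ? := mono_ge0 1 2 ha hx. have ? := mono_ge0 2 1 ha hx. have ? := mono_ge0 1 1 ha hx. have ? := mono_ge0 2 0 ha hx. have ? := mono_ge0 1 0 ha hx. have ? := mono_ge0 0 2 ha hx. have ? := mono_ge0 0 1 ha hx.
lra.
Qed.

Lemma pure_y3 (a x M X Cm Cy C3 : rat) : 0 <= a -> 0 <= x -> X = 4 + x -> M = (2 + a)*X - 3 ->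
  12*M*X*(Cm - Cy) = 3*M*X - M^+2 - X^+2 - 1 -> 36*X*(Cy + C3) = 9*X - X^+2 - 10 -> C3 <= 1/18 -> -48*Cm <= M - 4.
Proof.
move=> ha hx hX hM hK hC h3.
have hMX : 0 < M*X by rewrite hM hX; apply: mulr_gt0; nra.
have hC' : M*(36*X*(Cy + C3)) = M*(9*X - X^+2 - 10) by rewrite hC.
have h3' := ler_wpM2l (ltW hMX) h3.
apply: (@fin_step (12*M*X)); first by rewrite -mulrA; apply: mulr_gt0 => //; lra.
move: hC' hK h3'; subst M X => hC' hK h3'.
have ? := mono_ge0 2 3 ha hx. have ? := mono_ge0 2 2 ha hx. have ? := mono_ge0 1 3 ha hx. have ? := mono_ge0 1 2 ha hx. have ? := mono_ge0 2 1 ha hx. have ? := mono_ge0 1 1 ha hx. have ? := mono_ge0 1 0 ha hx. have ? := mono_ge0 0 3 ha hx. have ? := mono_ge0 0 2 ha hx. have ? := mono_ge0 0 1 ha hx.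
lra.
Qed.

Lemma pure_h (a h H M X Cm Cy C1 : rat) : 0 <= a -> 0 <= h -> H = 4 + h -> X = 2*H - 1 -> M = (2 + a)*X + H - 1 ->
  12*M*X*(Cm - Cy) = 3*M*X - M^+2 - X^+2 - 1 -> 12*X*H*(Cy - C1) = 3*X*H - X^+2 - H^+2 - 1 ->
  12*H*C1 = 3*H - H^+2 - 2 -> -48*Cm <= M - 4.
Proof.
move=> ha hh hH hX hM hK hC hC1.
have hMX : 0 < M*X*H by rewrite hM hX hH; apply: mulr_gt0; [apply: mulr_gt0|]; nra.
have e1 : M*(12*X*H*(Cy - C1)) = M*(3*X*H - X^+2 - H^+2 - 1) by rewrite hC.
have e2 : M*X*(12*H*C1) = M*X*(3*H - H^+2 - 2) by rewrite hC1.
have e3 : H*(12*M*X*(Cm - Cy)) = H*(3*M*X - M^+2 - X^+2 - 1) by rewrite hK.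
apply: (@fin_step (12*M*X*H)); first by rewrite -!mulrA; apply: mulr_gt0 => //; rewrite mulrA; lra.
move: e1 e2 e3; subst M X H => e1 e2 e3.
have ? := mono_ge0 2 4 ha hh. have ? := mono_ge0 2 3 ha hh. have ? := mono_ge0 1 4 ha hh. have ? := mono_ge0 1 3 ha hh. have ? := mono_ge0 2 2 ha hh. have ? := mono_ge0 1 2 ha hh. have ? := mono_ge0 2 1 ha hh. have ? := mono_ge0 1 1 ha hh. have ? := mono_ge0 0 4 ha hh. have ? := mono_ge0 0 3 ha hh. have ? := mono_ge0 0 2 ha hh. have ? := mono_ge0 0 1 ha hh. have ? := mono_ge0 2 0 ha hh. have ? := mono_ge0 1 0 ha hh.
lra.
Qed.

Lemma pure_t (a h H M X Cm Cy C1 : rat) : 0 <= a -> 0 <= h -> H = 4 + h -> X = 3*H - 1 -> M = (1 + a)*X + 2*H - 1 ->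
  12*M*X*(Cm - Cy) = 3*M*X - M^+2 - X^+2 - 1 -> 12*X*H*(Cy - C1) = 3*X*H - X^+2 - H^+2 - 1 ->
  12*H*C1 = 3*H - H^+2 - 2 -> -48*Cm <= M - 4.
Proof.
move=> ha hh hH hX hM hK hC hC1.
have hMX : 0 < M*X*H by rewrite hM hX hH; apply: mulr_gt0; [apply: mulr_gt0|]; nra.
have e1 : M*(12*X*H*(Cy - C1)) = M*(3*X*H - X^+2 - H^+2 - 1) by rewrite hC.
have e2 : M*X*(12*H*C1) = M*X*(3*H - H^+2 - 2) by rewrite hC1.
have e3 : H*(12*M*X*(Cm - Cy)) = H*(3*M*X - M^+2 - X^+2 - 1) by rewrite hK.
apply: (@fin_step (12*M*X*H)); first by rewrite -!mulrA; apply: mulr_gt0 => //; rewrite mulrA; lra.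
move: e1 e2 e3; subst M X H => e1 e2 e3.
have ? := mono_ge0 2 4 ha hh. have ? := mono_ge0 2 3 ha hh. have ? := mono_ge0 1 4 ha hh. have ? := mono_ge0 1 3 ha hh. have ? := mono_ge0 2 2 ha hh. have ? := mono_ge0 1 2 ha hh. have ? := mono_ge0 2 1 ha hh. have ? := mono_ge0 1 1 ha hh. have ? := mono_ge0 0 4 ha hh. have ? := mono_ge0 0 3 ha hh. have ? := mono_ge0 0 2 ha hh. have ? := mono_ge0 0 1 ha hh. have ? := mono_ge0 2 0 ha hh. have ? := mono_ge0 1 0 ha hh.
lra.
Qed.

Lemma pure_u (a h V Y M X Cm Cy Cuv Cv1 : rat) : 0 <= a -> 0 <= h -> V = 2 + h -> X = 3*V + 1 -> Y = 2*V + 1 -> M = (1 + a)*X + V ->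
  12*M*X*(Cm - Cy) = 3*M*X - M^+2 - X^+2 - 1 -> 12*X*Y*(Cy + Cuv) = 3*X*Y - X^+2 - Y^+2 - 1 ->
  12*Y*V*(Cuv + Cv1) = 3*Y*V - Y^+2 - V^+2 - 1 -> 12*V*Cv1 = 3*V - V^+2 - 2 -> -48*Cm <= M - 4.
Proof.
move=> ha hh hV hX hY hM hK hC hC2 hC1.
have hMX : 0 < M*X*Y*V by rewrite hM hX hY hV; apply: mulr_gt0; [apply: mulr_gt0; [apply: mulr_gt0|]|]; nra.
have e1 : M*V*(12*X*Y*(Cy + Cuv)) = M*V*(3*X*Y - X^+2 - Y^+2 - 1) by rewrite hC.
have e2 : M*X*(12*Y*V*(Cuv + Cv1)) = M*X*(3*Y*V - Y^+2 - V^+2 - 1) by rewrite hC2.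
have e4 : M*X*Y*(12*V*Cv1) = M*X*Y*(3*V - V^+2 - 2) by rewrite hC1.
have e3 : Y*V*(12*M*X*(Cm - Cy)) = Y*V*(3*M*X - M^+2 - X^+2 - 1) by rewrite hK.
apply: (@fin_step (12*M*X*Y*V)); first by rewrite -!mulrA; apply: mulr_gt0 => //; rewrite !mulrA; lra.
move: e1 e2 e3 e4; subst M X Y V => e1 e2 e3 e4.
have ? := mono_ge0 2 5 ha hh. have ? := mono_ge0 2 4 ha hh. have ? := mono_ge0 1 5 ha hh. have ? := mono_ge0 1 4 ha hh. have ? := mono_ge0 2 3 ha hh. have ? := mono_ge0 1 3 ha hh. have ? := mono_ge0 2 2 ha hh. have ? := mono_ge0 1 2 ha hh. have ? := mono_ge0 0 4 ha hh. have ? := mono_ge0 0 3 ha hh. have ? := mono_ge0 0 2 ha hh. have ? := mono_ge0 2 1 ha hh. have ? := mono_ge0 1 1 ha hh. have ? := mono_ge0 0 1 ha hh. have ? := mono_ge0 2 0 ha hh. have ? := mono_ge0 1 0 ha hh.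
lra.
Qed.

Definition exc (m x : nat) : bool :=
  [|| x == 1, x == 2, x == 3, x.*2 == m.+1, 3 * x == m.+1 | 3 * x == (m.*2).+1]%N.

Lemma natr_le {a b : nat} : (a <= b)%N -> (a%:R : rat) <= b%:R.
Proof. by rewrite ler_nat. Qed.

Lemma natr_eq {a b : nat} : a = b -> (a%:R : rat) = b%:R.
Proof. by move=> ->. Qed.

Lemma cw3_le x : cw 3 (x %% 3) <= 1/18.
Proof.
have : (x %% 3 < 3)%N by rewrite ltn_pmod.
case: (x %% 3)%N => [|[|[|k]]] hk.
+ rewrite cw0; lra.
+ rewrite cw31; lra.
+ rewrite cw32; lra.
+ exfalso; lia.
Qed.

Lemma bound m : forall x, (0 < x < m)%N -> coprime x m -> ~~ exc m x ->
  -48 * cw m x <= m%:R - 4.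
Proof.
elim/ltn_ind: m => m IH x /andP[x0 xm] cop nex.
have [x4 nex1 nex2 nex3] : [/\ (3 < x)%N, x.*2 != m.+1, 3 * x != m.+1 & 3 * x != (m.*2).+1]%N.
  move: nex; rewrite /exc.
  case/norP => /eqP h1 /norP [/eqP h2 /norP [/eqP h3 /norP [n1 /norP [n2 n3]]]].
  split => //; lia.
have m0 : (0 < m)%N by lia.
have [r Er] : exists r, (m %% x)%N = r by eexists.
have [a Ea] : exists a, (m %/ x)%N = a by eexists.
have hm : m = (a * x + r)%N by rewrite -Ea -Er -divn_eq.
have rx : (r < x)%N by rewrite -Er ltn_pmod.
have r0 : (0 < r)%N.
  rewrite lt0n; apply/negP => /eqP h.
  have : (x %| m)%N by apply/eqP; rewrite Er.
  move/gcdn_idPl; move: cop; rewrite /coprime => /eqP ->; lia.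
have a1 : (0 < a)%N.
  rewrite lt0n; apply/negP => /eqP a0; move: hm; rewrite a0 mul0n add0n; lia.
have cxr : coprime r x by rewrite -Er coprime_modl coprime_sym.
have [y Ey] : exists y, (x - r)%N = y by eexists.
have y0 : (0 < y)%N by lia.
have yx : (y < x)%N by lia.
have cyx : coprime y x by rewrite -Ey coprime_subl // ltnW.
have ry : r = (x - y)%N by lia.
have Key : 12 * m%:R * x%:R * (cw m x - cw x y) = 3 * m%:R * x%:R - m%:R^+2 - x%:R^+2 - 1 :> rat.
  by have := @cwK m x m0 x0; rewrite Er ry (@cw_anti x y y0 yx cyx).
have X4 : (4 : rat) <= x%:R by rewrite (natr_le (x4 : (4 <= x)%N)).
have MX : x%:R + 1 <= (m%:R : rat).
  have xm1 : (x + 1 <= m)%N by rewrite addn1.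
  by have := natr_le xm1; rewrite natrD.
case ex: (exc x y); last first.
  have hIH := IH x xm y (introT andP (conj y0 yx)) cyx (negbT ex).
  by apply: (@pure_gen (x%:R - 4) (m%:R - x%:R - 1) m%:R x%:R _ _ _ _ _ _ Key hIH); lra.
move: ex; rewrite /exc.
have [y1|ny1] := eqVneq y 1%N.
  move=> _; rewrite y1 in Key.
  have a3 : (3 <= a)%N.
    have : a = 1%N \/ a = 2%N \/ (3 <= a)%N by lia.
    case=> [a1'|[a2'|//]]; subst a; lia.
  have E : (m + 1 = a * x + x)%N by lia.
  move/natr_eq: E; rewrite !natrD !natrM => E.
  have hA : 0 <= (a%:R : rat) - 3 by move: (natr_le a3) => h; clear -h; lra.
  have hx : 0 <= (x%:R : rat) - 4 by clear -X4; lra.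
  have hX : x%:R = 4 + (x%:R - 4) :> rat by ring.
  have hM : m%:R = (4 + (a%:R - 3)) * x%:R - 1 :> rat by clear -E; lra.
  exact: (@pure_y1 (a%:R - 3) (x%:R - 4) m%:R x%:R _ (cw x 1) hA hx hX hM Key (@cw1 x x0)).
have [y2|ny2] := eqVneq y 2%N.
  move=> _; rewrite y2 in Key cyx.
  have xo : odd x by rewrite -coprime2n.
  have x5 : (5 <= x)%N by case: (x =P 4%N) xo => [->//|]; lia.
  have E : (m + 2 = a * x + x)%N by lia.
  move/natr_eq: E; rewrite !natrD !natrM => E.
  have hA : 0 <= (a%:R : rat) - 1 by move: (natr_le a1) => h; clear -h; lra.
  have hx : 0 <= (x%:R : rat) - 5 by move: (natr_le x5) => h; clear -h; lra.
  have hX : x%:R = 5 + (x%:R - 5) :> rat by ring.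
  have hM : m%:R = (2 + (a%:R - 1)) * x%:R - 2 :> rat by clear -E; lra.
  have := @cwK x 2 x0 isT; rewrite modn2 xo cw21 addr0 => K2.
  have hC : 24 * x%:R * cw x 2 = 6 * x%:R - x%:R ^+ 2 - 5 :> rat.
    by move: K2; move: (cw x 2) => c K2; clear -K2; lra.
  exact: (@pure_y2 (a%:R - 1) (x%:R - 5) m%:R x%:R _ (cw x 2) hA hx hX hM Key hC).
have [y3|ny3] := eqVneq y 3%N.
  move=> _; rewrite y3 in Key.
  have E : (m + 3 = a * x + x)%N by lia.
  move/natr_eq: E; rewrite !natrD !natrM => E.
  have hC3 := cw3_le x.
  have := @cwK x 3 x0 isT => K3.
  have hC : 36 * x%:R * (cw x 3 + cw 3 (x %% 3)) = 9 * x%:R - x%:R ^+ 2 - 10 :> rat.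
    by move: K3; move: (cw x 3) (cw 3 (x %% 3)) => c d K3; clear -K3; lra.
  have hA : 0 <= (a%:R : rat) - 1 by move: (natr_le a1) => h; clear -h; lra.
  have hx : 0 <= (x%:R : rat) - 4 by clear -X4; lra.
  have hX : x%:R = 4 + (x%:R - 4) :> rat by ring.
  have hM : m%:R = (2 + (a%:R - 1)) * x%:R - 3 :> rat by clear -E; lra.
  exact: (@pure_y3 (a%:R - 1) (x%:R - 4) m%:R x%:R _ (cw x 3) (cw 3 (x %% 3)) hA hx hX hM Key hC hC3).
rewrite /=.
case/orP => [/eqP yh|/orP [/eqP yt|/eqP yu]].
-
  have y4 : (4 <= y)%N by lia.
  have a2 : (2 <= a)%N.
    have : a = 1%N \/ (2 <= a)%N by lia.
    case=> [a1'|//]; subst a; lia.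
  have E : (m + 1 = a * x + y)%N by lia.
  move/natr_eq: E; rewrite !natrD !natrM => E.
  have Ex : (x + 1 = y * 2)%N by lia.
  move/natr_eq: Ex; rewrite !natrD !natrM => Ex.
  have xmy : (x %% y = y - 1)%N.
    have -> : (x = y + (y - 1))%N by lia.
    by rewrite modnDl modn_small //; lia.
  have K := @cwK x y x0 y0.
  have y1' : (1 < y)%N by lia.
  rewrite xmy (@cw_anti y 1 isT y1' (coprime1n y)) in K.
  have K1 := @cw1 y y0.
  have hA : 0 <= (a%:R : rat) - 2 by move: (natr_le a2) => h; clear -h; lra.
  have hy : 0 <= (y%:R : rat) - 4 by move: (natr_le y4) => h; clear -h; lra.
  have hH : y%:R = 4 + (y%:R - 4) :> rat by ring.
  have hX : x%:R = 2 * y%:R - 1 :> rat by clear -Ex; lra.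
  have hM : m%:R = (2 + (a%:R - 2)) * x%:R + y%:R - 1 :> rat by clear -E; lra.
  have hC : 12 * x%:R * y%:R * (cw x y - cw y 1) = 3 * x%:R * y%:R - x%:R ^+ 2 - y%:R ^+ 2 - 1 :> rat.
    by rewrite -K.
  exact: (@pure_h (a%:R - 2) (y%:R - 4) y%:R m%:R x%:R _ (cw x y) (cw y 1) hA hy hH hX hM Key hC K1).
-
  have y4 : (4 <= y)%N by lia.
  have E : (m + 1 = a * x + y * 2)%N by lia.
  move/natr_eq: E; rewrite !natrD !natrM => E.
  have Ex : (x + 1 = y * 3)%N by lia.
  move/natr_eq: Ex; rewrite !natrD !natrM => Ex.
  have xmy : (x %% y = y - 1)%N.
    have -> : (x = 2 * y + (y - 1))%N by lia.
    by rewrite modnMDl modn_small //; lia.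
  have K := @cwK x y x0 y0.
  have y1' : (1 < y)%N by lia.
  rewrite xmy (@cw_anti y 1 isT y1' (coprime1n y)) in K.
  have K1 := @cw1 y y0.
  have hA : 0 <= (a%:R : rat) - 1 by move: (natr_le a1) => h; clear -h; lra.
  have hy : 0 <= (y%:R : rat) - 4 by move: (natr_le y4) => h; clear -h; lra.
  have hH : y%:R = 4 + (y%:R - 4) :> rat by ring.
  have hX : x%:R = 3 * y%:R - 1 :> rat by clear -Ex; lra.
  have hM : m%:R = (1 + (a%:R - 1)) * x%:R + 2 * y%:R - 1 :> rat by clear -E; lra.
  have hC : 12 * x%:R * y%:R * (cw x y - cw y 1) = 3 * x%:R * y%:R - x%:R ^+ 2 - y%:R ^+ 2 - 1 :> rat.
    by rewrite -K.
  exact: (@pure_t (a%:R - 1) (y%:R - 4) y%:R m%:R x%:R _ (cw x y) (cw y 1) hA hy hH hX hM Key hC K1).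
-
  have r2 : (2 <= r)%N by lia.
  have E : (m = a * x + r)%N by lia.
  move/natr_eq: E; rewrite !natrD !natrM => E.
  have Ex : (x = r * 3 + 1)%N by lia.
  move/natr_eq: Ex; rewrite !natrD !natrM => Ex.
  have Ey' : (y = r * 2 + 1)%N by lia.
  move/natr_eq: Ey'; rewrite !natrD !natrM => Ey'.
  have xmy : (x %% y = r)%N.
    have -> : (x = y + r)%N by lia.
    by rewrite modnDl modn_small //; lia.
  have ymr : (y %% r = 1)%N.
    have -> : (y = 2 * r + 1)%N by lia.
    by rewrite modnMDl modn_small //; lia.
  have K := @cwK x y x0 y0; rewrite xmy in K.
  have K2 := @cwK y r y0 r0; rewrite ymr in K2.
  have K1 := @cw1 r r0.
  have hA : 0 <= (a%:R : rat) - 1 by move: (natr_le a1) => h; clear -h; lra.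
  have hr : 0 <= (r%:R : rat) - 2 by move: (natr_le r2) => h; clear -h; lra.
  have hV : r%:R = 2 + (r%:R - 2) :> rat by ring.
  have hX : x%:R = 3 * r%:R + 1 :> rat by clear -Ex; lra.
  have hY : y%:R = 2 * r%:R + 1 :> rat by clear -Ey'; lra.
  have hM : m%:R = (1 + (a%:R - 1)) * x%:R + r%:R :> rat by clear -E; lra.
  exact: (@pure_u (a%:R - 1) (r%:R - 2) r%:R y%:R m%:R x%:R _ (cw x y) (cw y r) (cw r 1) hA hr hV hX hY hM Key K K2 K1).
Qed.

Lemma final_contra (P cn c1 : rat) : 1 <= P ->
  -48 * cn <= P - 4 -> cn - c1 <= 1/4 * (P/4 - 1) -> 12 * P * c1 = 3 * P - P^+2 - 2 -> False.
Proof.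
move=> hP hb hle hc.
have h1 := ler_wpM2l (ltW (lt_le_trans ltr01 hP)) hle.
have h2 := ler_wpM2l (ltW (lt_le_trans ltr01 hP)) hb.
nra.
Qed.

Theorem mainTheorem4 (p : nat) (Y : lens) :
  (0 < p)%N -> is_lens Y -> H1_order Y = p ->
  casson_walker Y - casson_walker (Lens p 1) <= (1/4) * (p%:R / 4 - 1) ->
  lens_homeo Y (Lens p 1) \/ lens_homeo Y (Lens p 2) \/ lens_homeo Y (Lens p 3).
Proof.
case: Y => p' q p0 [/= _ cop] /= hp; subst p'.
rewrite /casson_walker /lens_homeo /= => hle.
have [p1|p2] : p = 1%N \/ (1 < p)%N by lia.
  by subst p; left; split=> //; left; rewrite !modz1.
have pz0 : (Posz p != 0)%R by rewrite eqz_nat -lt0n.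
have pz : (0 < Posz p)%R by rewrite ltz_nat.
have copm : coprimez (q %% p)%Z p by rewrite /coprimez gcdz_modl.
have hq0 := modz_ge0 q pz0.
have hqp := ltz_pmod q pz.
have one : (1 %% Posz p)%Z = 1%R by rewrite modz_small // ltz_nat.
rewrite one in hle.
move: hle copm hq0 hqp; case E: (q %% p)%Z => [n|n] // hle copm _ hnp.
rewrite ltz_nat in hnp.
rewrite coprimezE /= in copm.
have n0 : (0 < n)%N.
  rewrite lt0n; apply/negP => /eqP n0; move: copm; rewrite n0 /coprime gcd0n => /eqP h; lia.
rewrite /= (@cw_aux_eq p n.+1 p n) // (@cw_aux_eq p 2 p 1) // -/(cw p n) -/(cw p 1) in hle.
have P1 : (1 : rat) <= p%:R by rewrite (natr_le (ltnW p2 : (1 <= p)%N)).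
case ex: (exc p n); last first.
  have hb := @bound p n (introT andP (conj n0 hnp)) copm (negbT ex).
  have hc := @cw1 p p0.
  exfalso; move: hb hle hc; move: (cw p n) (cw p 1) => cn c1.
  exact: (@final_contra p%:R cn c1 P1).
move: ex; rewrite /exc.
case/orP => [/eqP e1|]; [|case/orP => [/eqP e2|]]; [| |case/orP => [/eqP e3|]];
  [| | |case/orP => [/eqP eh|]]; [| | | |case/orP => [/eqP et|/eqP eu]].
- left; split => //; left; rewrite e1 modz_small //; rewrite ltz_nat //.
- right; left; split => //; left; rewrite e2 modz_small //; rewrite ltz_nat; lia.
- right; right; split => //; left; rewrite e3 modz_small //; rewrite ltz_nat; lia.
- right; left; split => //; right.
  rewrite -modzMml E.
  have -> : (Posz n * 2 = Posz p + 1)%R by rewrite -PoszM -PoszD; congr Posz; lia.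
  by rewrite modzDl.
- right; right; split => //; right.
  rewrite -modzMml E.
  have -> : (Posz n * 3 = Posz p + 1)%R by rewrite -PoszM -PoszD; congr Posz; lia.
  by rewrite modzDl.
- right; right; split => //; right.
  rewrite -modzMml E.
  have -> : (Posz n * 3 = 2 * Posz p + 1)%R.
    by rewrite -(PoszM 2) -PoszM -PoszD; congr Posz; lia.
  by rewrite modzMDl.
Qed.
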